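(* Let $\langle A,\to\rangle$ be a conditional algebra, and for $U,V\subseteq\mathrm{Ul}(A)$ define $$U\to^{\sigma}V=\bigcup_{(O,Y)}\ \bigcap_{\substack{a,b\in A\\ \varphi(a)\subseteq O,\ Y\subseteq\varphi(b)}}\varphi(a\to b),$$ where $(O,Y)$ ranges over pairs with $O$ an open subset of the Stone space of $A$ with $U\subseteq O$ and $Y$ a closed subset with $Y\subseteq V$. Then $\langle\mathcal{P}(\mathrm{Ul}(A)),\to^{\sigma}\rangle$ is a conditional algebra.
   Context: A conditional algebra is a pair $\langle A,\to\rangle$ where $A$ is a Boolean algebra and $\to$ is a binary operation on $A$ such that for all $a,b,c$: $a\to 1=1$; $(a\to b)\wedge(a\to c)=a\to(b\wedge c)$; $(a\vee b)\to c\le (a\to c)\wedge(b\to c)$. $\mathrm{Ul}(A)$ is the set of ultrafilters of $A$ with the Stone topology (basic clopens $\varphi(a)=\{u:a\in u\}$). The operation $\to^\sigma$ is the $\sigma$-extension of $\to$ (viewed as antitone in the first and isotone in the second argument). *)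

(* Defs.v *)
From HB Require Import structures.
From mathcomp Require Import all_boot all_order.
From mathcomp Require Import boolp classical_sets.
Import Order.TTheory.
Export SetOrder.Exports.

Set Implicit Arguments.
Unset Strict Implicit.
Unset Printing Implicit Defensive.

Local Open Scope order_scope.

(* A Boolean algebra is a complemented distributive lattice with top and bottom
   (MathComp's ctbDistrLatticeType). *)

Definition conditional_algebra {d : Order.disp_t} (A : ctbDistrLatticeType d)
    (imp : A -> A -> A) : Prop :=
  [/\ (forall a : A, imp a \top = \top),
      (forall a b c : A, Order.meet (imp a b) (imp a c) = imp a (Order.meet b c))
    & (forall a b c : A, imp (Order.join a b) c <= Order.meet (imp a c) (imp b c))].

Local Open Scope classical_set_scope.

Definition is_filter {d : Order.disp_t} (A : ctbDistrLatticeType d) (F : set A) : Prop :=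
  [/\ F \top,
      (forall a b : A, F a -> (a <= b)%O -> F b)
    & (forall a b : A, F a -> F b -> F (Order.meet a b))].

Definition is_proper_filter {d : Order.disp_t} (A : ctbDistrLatticeType d) (F : set A) : Prop :=
  is_filter F /\ ~ F \bot.

Definition is_ultrafilter {d : Order.disp_t} (A : ctbDistrLatticeType d) (F : set A) : Prop :=
  is_proper_filter F /\
  (forall G : set A, is_proper_filter G -> F `<=` G -> G = F).

Definition Ul {d : Order.disp_t} (A : ctbDistrLatticeType d) : Type :=
  {F : set A | is_ultrafilter F}.

Definition phi {d : Order.disp_t} (A : ctbDistrLatticeType d) (a : A) : set (Ul A) :=
  [set u | proj1_sig u a].

Definition stone_open {d : Order.disp_t} (A : ctbDistrLatticeType d) (O : set (Ul A)) : Prop :=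
  forall u, O u -> exists a : A, phi a u /\ phi a `<=` O.

Definition stone_closed {d : Order.disp_t} (A : ctbDistrLatticeType d) (Y : set (Ul A)) : Prop :=
  stone_open (~` Y).

Definition sigma_imp {d : Order.disp_t} (A : ctbDistrLatticeType d) (imp : A -> A -> A)
    (U V : set (Ul A)) : set (Ul A) :=
  [set u | exists (O Y : set (Ul A)),
      [/\ stone_open O, U `<=` O, stone_closed Y, Y `<=` V &
          forall a b : A, phi a `<=` O -> Y `<=` phi b -> phi (imp a b) u]].

(* Main.v *)
Require Import Defs.
From HB Require Import structures.
From mathcomp Require Import all_boot all_order.
From mathcomp Require Import boolp classical_sets.

Import Order.Theory.
Local Open Scope classical_set_scope.

Section Aux.
Variables (d : Order.disp_t) (A : ctbDistrLatticeType d).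
Implicit Types (u w : Ul A) (a b c : A).

Lemma uf_top u : proj1_sig u \top%O.
Proof. by case: u => F [[[]]]. Qed.
Lemma uf_up u a b : proj1_sig u a -> (a <= b)%O -> proj1_sig u b.
Proof. by case: u => F [[[_ H _] _] _] /=; apply: H. Qed.
Lemma uf_meet u a b : proj1_sig u a -> proj1_sig u b -> proj1_sig u (Order.meet a b).
Proof. by case: u => F [[[_ _ H] _] _] /=; apply: H. Qed.
Lemma uf_bot u : ~ proj1_sig u \bot%O.
Proof. by case: u => F P /=; case: P => [[_ Hb] _]. Qed.
Lemma uf_not_both u a : proj1_sig u a -> ~ proj1_sig u (~` a)%O.
Proof.
move=> Ha Hc; apply: (@uf_bot u); rewrite -(meetxC a); exact: uf_meet.
Qed.

Lemma uf_compl u a : ~ proj1_sig u a -> proj1_sig u (~` a)%O.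
Proof.
move=> Hna.
pose G := fun x : A => exists f, proj1_sig u f /\ (Order.meet f a <= x)%O.
have [Gb|Gnb] := pselect (G \bot%O).
  case: Gb => f [uf]; rewrite lex0 disj_leC => H; exact: uf_up uf H.
have GF : is_filter G.
  split.
  - by exists \top%O; split; [exact: uf_top| rewrite meet1x lex1].
  - by move=> x y [f [uf fx]] xy; exists f; split => //; exact: le_trans xy.
  - move=> x y [f [uf fx]] [g [ug gy]]; exists (Order.meet f g); split.
      exact: uf_meet.
    rewrite lexI; apply/andP; split.
      apply: le_trans fx; apply: leI2 => //; exact: leIxl.
    apply: le_trans gy; apply: leI2 => //; exact: leIxr.
have uG : proj1_sig u `<=` G.
  by move=> x ux; exists x; split => //; exact: leIxl.
have := (proj2 (proj2_sig u)) G (conj GF Gnb) uG => EG.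
exfalso; apply: Hna; rewrite -EG; exists \top%O; split; first exact: uf_top.
by rewrite meet1x.
Qed.

Lemma ext (F : set A) : is_proper_filter F -> exists u : Ul A, F `<=` proj1_sig u.
Proof.
move=> PF.
pose T := {G : set A | is_proper_filter G /\ F `<=` G}.
pose R := fun s t : T => `[< proj1_sig s `<=` proj1_sig t >].
have [||||t tmax] := @Zorn T R.
- by move=> t; apply/asboolP.
- by move=> r s t /asboolP rs /asboolP st; apply/asboolP; exact: subset_trans st.
- move=> [s Ps] [t Pt] /asboolP st /asboolP ts; apply: eq_exist.
  by apply/seteqP; split.
- move=> Ch Htot.
  pose U := fun x : A => F x \/ exists s : T, Ch s /\ proj1_sig s x.
  have PU : is_proper_filter U /\ F `<=` U.
    split; last by move=> x Fx; left.
    case: PF => [[Ft Fup Fmeet] Fb].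
    split; first split.
    + by left.
    + move=> a b [Fa|[s [Cs sa]]] ab; first by left; exact: Fup ab.
      right; exists s; split => //; case: (proj2_sig s) => [[[_ H _] _] _]; exact: H ab.
    + have Flift : forall (s : T) x, F x -> proj1_sig s x.
        by move=> s x Fx; case: (proj2_sig s) => _ H; exact: H.
      have smeet : forall (s : T) x y, proj1_sig s x -> proj1_sig s y ->
          proj1_sig s (Order.meet x y).
        by move=> s x y; case: (proj2_sig s) => [[[_ _ H] _] _]; exact: H.
      move=> a b [Fa|[s [Cs sa]]] [Fb'|[t [Ct tb]]].
      * by left; exact: Fmeet.
      * by right; exists t; split => //; apply: smeet => //; exact: Flift.
      * by right; exists s; split => //; apply: smeet => //; exact: Flift.
      * case: (Htot s t Cs Ct) => /asboolP st.
          by right; exists t; split => //; apply: smeet => //; exact: st.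
        by right; exists s; split => //; apply: smeet => //; exact: st.
    + move=> [//|[s [_ sb]]]; by case: (proj2_sig s) => [[_ H] _].
  exists (exist _ U PU) => s Cs; apply/asboolP => x sx /=; right; exists s; by split.
- case: (proj2_sig t) => [[tF tb] Ft].
  have ut : is_ultrafilter (proj1_sig t).
    split; first by split.
    move=> G PG tG.
    have PG' : is_proper_filter G /\ F `<=` G by split => //; exact: subset_trans tG.
    have := tmax (exist _ G PG'); rewrite /R /= => H.
    by have := f_equal (@proj1_sig _ _) (H (asboolT tG)).
  by exists (exist _ (proj1_sig t) ut).
Qed.

Lemma closed_rep (Y : set (Ul A)) : stone_closed Y ->
  forall w : Ul A, (forall c, Y `<=` phi c -> proj1_sig w c) -> Y w.
Proof.
move=> cY w Hw; apply/not_notP => nYw.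
have [a [aw aY]] := cY w nYw.
have Yc : Y `<=` phi (~` a)%O.
  move=> v Yv; apply: uf_compl => va; exact: (aY v va).
exact: uf_not_both aw (Hw _ Yc).
Qed.

Lemma top_only b : setT `<=` phi b -> b = \top%O.
Proof.
move=> Hb; apply/not_notP => nb.
pose F := fun x : A => ((~` b)%O <= x)%O.
have PF : is_proper_filter F.
  split; first split.
  - exact: lex1.
  - by move=> x y Fx xy; exact: le_trans xy.
  - by move=> x y Fx Fy; rewrite /F lexI; apply/andP; split.
  rewrite /F lex0 => /eqP; rewrite -compl1 => /compl_inj; exact: nb.
have [w Fw] := @ext (fun x => F x) PF.
exact: uf_not_both (Hb w I) (Fw _ (lexx _)).
Qed.

Lemma compact2 (Y1 Y2 : set (Ul A)) b : stone_closed Y1 -> stone_closed Y2 ->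
  Y1 `&` Y2 `<=` phi b -> exists c1 c2,
  [/\ Y1 `<=` phi c1, Y2 `<=` phi c2 & (Order.meet c1 c2 <= b)%O].
Proof.
move=> cY1 cY2 Yb.
pose G := fun x : A => exists c1 c2, [/\ Y1 `<=` phi c1, Y2 `<=` phi c2 &
   (Order.meet c1 (Order.meet c2 (~` b)) <= x)%O].
have Ytop : forall Y : set (Ul A), Y `<=` phi \top%O.
  by move=> Y v _; exact: uf_top.
have [[c1 [c2 [h1 h2 hb]]]|Gnb] := pselect (G \bot%O).
  exists c1, c2; split => //.
  move: hb; rewrite lex0 meetA disj_leC complK //.
have GF : is_filter G.
  split.
  - by exists \top%O, \top%O; split => //; rewrite lex1.
  - by move=> x y [c1 [c2 [h1 h2 hx]]] xy; exists c1, c2; split => //; exact: le_trans xy.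
  - move=> x y [c1 [c2 [h1 h2 hx]]] [e1 [e2 [k1 k2 hy]]].
    exists (Order.meet c1 e1), (Order.meet c2 e2); split.
    + by move=> v Yv; apply: uf_meet; [exact: h1|exact: k1].
    + by move=> v Yv; apply: uf_meet; [exact: h2|exact: k2].
    + rewrite lexI; apply/andP; split.
        apply: le_trans hx; apply: leI2; first exact: leIxl.
        by apply: leI2 => //; exact: leIxl.
      apply: le_trans hy; apply: leI2; first exact: leIxr.
      by apply: leI2 => //; exact: leIxr.
have [w Gw] := @ext G (conj GF Gnb).
have w1 : Y1 w.
  apply: closed_rep => // c Yc; apply: Gw; exists c, \top%O; split => //.
  exact: leIxl.
have w2 : Y2 w.
  apply: closed_rep => // c Yc; apply: Gw; exists \top%O, c; split => //.
  by rewrite meet1x; exact: leIxl.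
exfalso; apply: (@uf_not_both w b (Yb w (conj w1 w2))); apply: Gw.
by exists \top%O, \top%O; split => //; rewrite !meet1x.
Qed.

Lemma open_meet (O1 O2 : set (Ul A)) : stone_open O1 -> stone_open O2 ->
  stone_open (O1 `&` O2).
Proof.
move=> h1 h2 u [u1 u2].
have [a1 [a1u s1]] := h1 u u1; have [a2 [a2u s2]] := h2 u u2.
exists (Order.meet a1 a2); split; first exact: uf_meet.
move=> v va; split.
  by apply: s1; apply: uf_up va _; exact: leIxl.
by apply: s2; apply: uf_up va _; exact: leIxr.
Qed.

Lemma closed_meet (Y1 Y2 : set (Ul A)) : stone_closed Y1 -> stone_closed Y2 ->
  stone_closed (Y1 `&` Y2).
Proof.
move=> h1 h2 u nu.
have [n1|n1] := pselect (Y1 u).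
  have n2 : ~ Y2 u by move=> y2; apply: nu.
  have [a [au sa]] := h2 u n2; exists a; split => // v va [_ y2]; exact: sa v va y2.
have [a [au sa]] := h1 u n1; exists a; split => // v va [y1 _]; exact: sa v va y1.
Qed.

Lemma open_top : stone_open (@setT (Ul A)).
Proof. by move=> u _; exists \top%O; split => //; exact: uf_top. Qed.

Lemma closed_top : stone_closed (@setT (Ul A)).
Proof. by move=> u /(_ I). Qed.

End Aux.

Theorem theorem2p15 (d : Order.disp_t) (A : ctbDistrLatticeType d) (imp : A -> A -> A) :
  conditional_algebra imp ->
  conditional_algebra (A := set (Ul A)) (sigma_imp imp).
Proof.
case=> H1 H2 H3.
have mono : forall a b c, (b <= c)%O -> (imp a b <= imp a c)%O.
  move=> a b c bc; rewrite -[b](meet_l bc) -H2; exact: leIxr.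
split.
- move=> U; rewrite topEset; apply/seteqP; split => // u _.
  exists setT, setT; split => //; [exact: open_top|exact: closed_top|].
  move=> a b _ /top_only ->; rewrite H1; exact: uf_top.
- move=> U V W; rewrite meetEset; apply/seteqP; split => u.
  + move=> [[O1 [Y1 [o1 s1 c1 y1 h1]]] [O2 [Y2 [o2 s2 c2 y2 h2]]]].
    exists (O1 `&` O2), (Y1 `&` Y2); split.
    * exact: open_meet.
    * by move=> x Ux; split; [exact: s1|exact: s2].
    * exact: closed_meet.
    * by move=> x [? ?]; split; [exact: y1|exact: y2].
    * move=> a b aO Yb.
      have [e1 [e2 [k1 k2 hb]]] := @compact2 d A Y1 Y2 b c1 c2 Yb.
      have aO1 : phi a `<=` O1 by move=> v /aO [].
      have aO2 : phi a `<=` O2 by move=> v /aO [].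
      have := @uf_meet d A u _ _ (h1 _ _ aO1 k1) (h2 _ _ aO2 k2); rewrite /phi /= H2 => H.
      exact: uf_up H (mono _ _ _ hb).
  + move=> [O [Y [o s c y h]]]; split; exists O, Y; split => //.
    * by move=> x /y [].
    * by move=> x /y [].
- move=> U V W; rewrite joinEset meetEset subsetEset => u [O [Y [o s c y h]]].
  split; exists O, Y; split => //.
  * by move=> x Ux; apply: s; left.
  * by move=> x Ux; apply: s; right.
Qed.
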